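(* Let $L\in\mathbb{R}^{k\times k}$ be any task loss matrix with nonnegative entries, let $\Phi_{quad}(f,y)=\frac{1}{2k}\|f+L(:,y)\|_2^2$ be its quadratic surrogate, and let $\mathcal{F}\subseteq\mathbb{R}^k$ be a subspace containing the column space of $L$. Then for all $\varepsilon\ge0$, $$H_{\Phi_{quad},L,\mathcal{F}}(\varepsilon)\ \ge\ \frac{\varepsilon^2}{2k\max_{i\ne j}\|P_{\mathcal{F}}\Delta_{ij}\|_2^2}\ \ge\ \frac{\varepsilon^2}{4k},$$ where $P_{\mathcal{F}}$ is the orthogonal projection onto $\mathcal{F}$, $\Delta_{ij}=e_i-e_j$, and $e_c$ is the $c$-th standard basis vector of $\mathbb{R}^k$.
   Context: Labels are $\{1,\dots,k\}$; $L(:,y)$ denotes the $y$-th column of $L$. $\mathrm{pred}(f)$ is the smallest index maximizing $f_c$. For $q\in\Delta_k$ (probability simplex): $\ell(f,q)=\sum_c q_cL(\mathrm{pred}(f),c)$, $\phi(f,q)=\sum_c q_c\Phi(f,c)$, $\delta\ell(f,q)=\ell(f,q)-\inf_{\hat f\in\mathcal{F}}\ell(\hat f,q)$, $\delta\phi(f,q)=\phi(f,q)-\inf_{\hat f\in\mathcal{F}}\phi(\hat f,q)$. Calibration function: $H_{\Phi,L,\mathcal{F}}(\varepsilon)=\inf\{\delta\phi(f,q):f\in\mathcal{F},q\in\Delta_k,\delta\ell(f,q)\ge\varepsilon\}$, $+\infty$ if the feasible set is empty. Convention $1/0=+\infty$. *)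

(* Defs.v *)
From HB Require Import structures.
From mathcomp Require Import all_boot all_order all_algebra.
From mathcomp Require Import all_classical all_reals ereal.
Set Implicit Arguments. Unset Strict Implicit. Unset Printing Implicit Defensive.
Import Order.TTheory GRing.Theory Num.Theory.
Local Open Scope classical_set_scope.
Local Open Scope ring_scope.

Section Defs.
Variable R : realType.
Variable k : nat.

Definition sqnorm (v : 'rV[R]_k) : R := \sum_(i < k) v 0 i ^+ 2.

Definition Delta (i j : 'I_k) : 'rV[R]_k := delta_mx 0 i - delta_mx 0 j.

(* matrix of the orthogonal projection onto the row space of F
   (acting on row vectors by right multiplication): B^T (B B^T)^{-1} B
   with B a basis (row_base) of F. *)
Definition projmx (F : 'M[R]_k) : 'M[R]_k :=
  let B := row_base F in (B^T *m invmx (B *m B^T)) *m B.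

Definition projF (F : 'M[R]_k) (v : 'rV[R]_k) : 'rV[R]_k := v *m projmx F.

(* pred(f): smallest index maximizing f_c (None only when k = 0) *)
Definition predf (f : 'rV[R]_k) : option 'I_k :=
  [pick i | [forall j : 'I_k, f 0 j <= f 0 i] &&
            [forall j : 'I_k, ((j < i)%N) ==> (f 0 j < f 0 i)]].

Definition lossAt (L : 'M[R]_k) (f : 'rV[R]_k) (c : 'I_k) : R :=
  if predf f is Some i then L i c else 0.

Definition simplex (q : 'rV[R]_k) : Prop :=
  (forall c, 0 <= q 0 c) /\ \sum_(c < k) q 0 c = 1.

Definition ell (L : 'M[R]_k) (f q : 'rV[R]_k) : R :=
  \sum_(c < k) q 0 c * lossAt L f c.

Definition Phi_quad (L : 'M[R]_k) (f : 'rV[R]_k) (y : 'I_k) : R :=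
  (2 * k%:R)^-1 * sqnorm (f + (col y L)^T).

Definition phi (L : 'M[R]_k) (f q : 'rV[R]_k) : R :=
  \sum_(c < k) q 0 c * Phi_quad L f c.

Definition inF (F : 'M[R]_k) (f : 'rV[R]_k) : Prop := (f <= F)%MS.

Definition dell (F L : 'M[R]_k) (f q : 'rV[R]_k) : R :=
  ell L f q - inf [set ell L g q | g in inF F].

Definition dphi (F L : 'M[R]_k) (f q : 'rV[R]_k) : R :=
  phi L f q - inf [set phi L g q | g in inF F].

(* calibration function; ereal_inf of the empty set is +oo *)
Definition Hcal (F L : 'M[R]_k) (eps : R) : \bar R :=
  ereal_inf [set x : \bar R | exists f q, inF F f /\ simplex q /\
                eps <= dell F L f q /\ x = (dphi F L f q)%:E].

Definition maxProjDelta (F : 'M[R]_k) : R :=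
  \big[Num.max/0]_(ij : 'I_k * 'I_k | ij.1 != ij.2)
     sqnorm (projF F (Delta ij.1 ij.2)).

End Defs.

Definition invE {R : realType} (x : R) : \bar R :=
  if x == 0 then +oo%E else (x^-1)%:E.

(* Main.v *)
Require Import Defs.
From HB Require Import structures.
From mathcomp Require Import all_boot all_order all_algebra.
From mathcomp Require Import all_classical all_reals ereal.
From mathcomp Require Import lra ring.
Import Order.TTheory GRing.Theory Num.Theory.
Local Open Scope ring_scope.

Section Proj.
Variable R : realType.
Variable k : nat.

Lemma sqnormE (v : 'rV[R]_k) : sqnorm v = (v *m v^T) 0 0.
Proof. rewrite /sqnorm mxE; apply: eq_bigr => i _; by rewrite mxE expr2. Qed.

Lemma sqnorm_ge0 (v : 'rV[R]_k) : 0 <= sqnorm v.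
Proof. by apply: sumr_ge0 => i _; apply: sqr_ge0. Qed.

Lemma sqnorm_eq0 m (v : 'rV[R]_m) : \sum_(i < m) v 0 i ^+ 2 = 0 -> v = 0.
Proof.
move=> h; apply/rowP => i; rewrite mxE.
have h2 : v 0 i ^+ 2 = 0.
  by apply: (psumr_eq0P _ h) => // j _; apply: sqr_ge0.
by apply/eqP; rewrite -sqrf_eq0; apply/eqP.
Qed.

Lemma BBt_unit (F : 'M[R]_k) :
  (row_base F *m (row_base F)^T) \in unitmx.
Proof.
set B := row_base F; rewrite -row_free_unit; apply: inj_row_free => v hv.
have hB : row_free B by exact: row_base_free.
have : (v *m B) = 0.
  apply: (@sqnorm_eq0 k).
  have e : \sum_(i < k) (v *m B) 0 i ^+ 2 = ((v *m B) *m (v *m B)^T) 0 0.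
    rewrite mxE; apply: eq_bigr => i _; by rewrite [_^T _ _]mxE expr2.
  rewrite e trmx_mul mulmxA -(mulmxA v) hv mul0mx mxE //.
by move=> h; apply: (row_free_inj hB); rewrite h mul0mx.
Qed.

Lemma projmx_sym_gen r (B : 'M[R]_(r, k)) :
  (B^T *m invmx (B *m B^T) *m B)^T = B^T *m invmx (B *m B^T) *m B.
Proof.
rewrite trmx_mul trmx_mul trmxK trmx_inv trmx_mul trmxK.
by rewrite mulmxA.
Qed.

Lemma projmx_sym (F : 'M[R]_k) : (projmx F)^T = projmx F.
Proof. exact: projmx_sym_gen. Qed.

Lemma projmx_fix_gen r (B : 'M[R]_(r, k)) :
  B *m B^T \in unitmx -> forall (D : 'rV[R]_r),
  D *m B *m (B^T *m invmx (B *m B^T) *m B) = D *m B.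
Proof.
move=> hu D; rewrite !mulmxA -(mulmxA D B) -(mulmxA D) mulmxV ?mulmx1 //.
Qed.

Lemma projmx_fix (F : 'M[R]_k) (u : 'rV[R]_k) : (u <= F)%MS -> u *m projmx F = u.
Proof.
move=> hu.
have : (u <= row_base F)%MS by rewrite eq_row_base.
case/submxP => D ->.
rewrite /projmx /=; apply: projmx_fix_gen. exact (BBt_unit F).
Qed.

Lemma projmx_idem (F : 'M[R]_k) : projmx F *m projmx F = projmx F.
Proof.
apply/row_matrixP => i; rewrite row_mul projmx_fix //.
rewrite /projmx; apply: submx_trans (row_sub _ _) _.
apply: submx_trans (submxMl _ _) _; by rewrite eq_row_base.
Qed.

Lemma mxsubE m n (A B : 'M[R]_(m, n)) i j : (A - B) i j = A i j - B i j.
Proof. by rewrite !mxE. Qed.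

Lemma proj_le_gen (P : 'M[R]_k) (v : 'rV[R]_k) :
  P^T = P -> P *m P = P -> sqnorm (v *m P) <= sqnorm v.
Proof.
move=> hs hi.
have e1 : sqnorm (v *m P) = (v *m P *m v^T) 0 0.
  by rewrite sqnormE trmx_mul hs mulmxA -(mulmxA v P P) hi.
have e2 : sqnorm (v - v *m P) = sqnorm v - sqnorm (v *m P).
  rewrite e1 !sqnormE linearB /= !mulmxBl !mulmxBr.
  rewrite trmx_mul hs !mulmxA -(mulmxA v P P) hi subrr subr0.
  by rewrite mxsubE.
have := sqnorm_ge0 (v - v *m P); rewrite e2; lra.
Qed.

Lemma projF_le (F : 'M[R]_k) (v : 'rV[R]_k) : sqnorm (projF F v) <= sqnorm v.
Proof. rewrite /projF; apply: proj_le_gen; [exact: projmx_sym | exact: projmx_idem]. Qed.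

Lemma predf_some (i0 : 'I_k) (f : 'rV[R]_k) :
  exists i, predf f = Some i /\ forall j, f 0 j <= f 0 i.
Proof.
rewrite /predf; case: pickP => [i /andP[/forallP h _]|hn]; first by exists i.
exfalso.
case: (@arg_maxP _ R _ i0 predT (fun i => f 0 i) isT) => m _ hm.
pose S := [pred i : 'I_k | [forall j, f 0 j <= f 0 i]].
have Sm : S m by apply/forallP => j; exact: hm.
case: (arg_minnP (fun i : 'I_k => nat_of_ord i) Sm) => a Sa amin.
move: (hn a) => /negP; apply; apply/andP; split; first exact: Sa.
apply/forallP => j; apply/implyP => hj.
have : f 0 j <= f 0 a by move/forallP: Sa.
rewrite le_eqVlt => /orP[/eqP e|//].
have Sj : S j by apply/forallP => l; rewrite e; move/forallP: Sa.
by have := amin j Sj; rewrite leqNgt hj.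
Qed.

Lemma CS (a b : 'I_k -> R) :
  (\sum_i a i * b i) ^+ 2 <= (\sum_i a i ^+ 2) * (\sum_i b i ^+ 2).
Proof.
set A := \sum_i a i ^+ 2; set B := \sum_i b i ^+ 2; set D := \sum_i a i * b i.
have B0 : 0 <= B by apply: sumr_ge0 => i _; apply: sqr_ge0.
case: (eqVneq B 0) => hB.
  have hb : forall i, b i = 0.
    move=> i; have : b i ^+ 2 = 0.
      by apply: (psumr_eq0P _ hB) => // j _; apply: sqr_ge0.
    by move/eqP; rewrite sqrf_eq0 => /eqP.
  have -> : D = 0 by rewrite /D big1 // => i _; rewrite hb mulr0.
  by rewrite expr0n /= hB mulr0.
have Bp : 0 < B by rewrite lt_def hB.
have h : 0 <= \sum_i (B * a i - D * b i) ^+ 2 by apply: sumr_ge0 => i _; apply: sqr_ge0.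
have e : \sum_i (B * a i - D * b i) ^+ 2 = B * (B * A - D ^+ 2).
  transitivity (\sum_i (B ^+ 2 * a i ^+ 2 - (2 * B * D) * (a i * b i) + D ^+ 2 * b i ^+ 2)).
    by apply: eq_bigr => i _; ring.
  rewrite big_split sumrB /= -!mulr_sumr -/A -/B -/D; ring.
move: h; rewrite e pmulr_rge0 // subr_ge0 => h.
by rewrite mulrC.
Qed.

Lemma mxoppE m n (A : 'M[R]_(m, n)) i j : (- A) i j = - A i j.
Proof. by rewrite !mxE. Qed.
Lemma mxaddE m n (A B : 'M[R]_(m, n)) i j : (A + B) i j = A i j + B i j.
Proof. by rewrite !mxE. Qed.

Lemma colTE (L : 'M[R]_k) c i : (col c L)^T 0 i = L i c.
Proof. by rewrite !mxE. Qed.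

Definition Lq (L : 'M[R]_k) (q : 'rV[R]_k) : 'rV[R]_k :=
  \sum_(c < k) q 0 c *: (col c L)^T.

Lemma LqE L q i : Lq L q 0 i = \sum_c q 0 c * L i c.
Proof. rewrite /Lq summxE; apply: eq_bigr => c _; by rewrite !mxE. Qed.

Lemma Lq_in L q (F : 'M[R]_k) : (forall y : 'I_k, ((col y L)^T <= F)%MS) ->
  (Lq L q <= F)%MS.
Proof. by move=> hF; apply: summx_sub => c _; apply: scalemx_sub. Qed.

Lemma ell_pred L f q i : predf f = Some i -> ell L f q = Lq L q 0 i.
Proof. by move=> e; rewrite /ell /lossAt e LqE. Qed.

Lemma dell_bound (i0 : 'I_k) L (F : 'M[R]_k) q f eps :
  eps <= dell F L f q ->
  exists i j, (forall l, f 0 l <= f 0 i) /\ eps <= Lq L q 0 i - Lq L q 0 j.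
Proof.
move=> h.
have [i [ei hi]] := predf_some i0 f.
have [j [ej hj]] := predf_some i0 (- Lq L q).
exists i, j; split=> //.
have lb : Lq L q 0 j <= inf [set ell L g q | g in inF F].
  apply: lb_le_inf.
    by exists (ell L 0 q), 0 => //; exact: sub0mx.
  move=> x [g _ <-].
  have [l [el _]] := predf_some i0 g.
  rewrite (ell_pred _ _ _ _ el); have := hj l; rewrite !mxoppE; lra.
move: h; rewrite /dell (ell_pred _ _ _ _ ei); lra.
Qed.

Lemma phi_diff L q g : simplex q ->
  phi L g q - phi L (- Lq L q) q = (2 * k%:R)^-1 * sqnorm (g + Lq L q).
Proof.
case=> _ hq1.
rewrite /phi -sumrB.
transitivity (\sum_c (2 * k%:R)^-1 * (\sum_i q 0 c *
   ((g 0 i + L i c) ^+ 2 - (L i c - Lq L q 0 i) ^+ 2))).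
  apply: eq_bigr => c _; rewrite /Phi_quad /sqnorm -mulrBr -mulrBr -sumrB.
  rewrite mulrCA mulr_sumr; congr (_ * _); apply: eq_bigr => i _.
  by rewrite !mxaddE mxoppE !colTE (addrC (- _)).
rewrite -mulr_sumr exchange_big /=; congr (_ * _).
rewrite /sqnorm; apply: eq_bigr => i _.
transitivity (\sum_c (q 0 c * (g 0 i ^+ 2 - Lq L q 0 i ^+ 2)
                      + 2 * (g 0 i + Lq L q 0 i) * (q 0 c * L i c))).
  by apply: eq_bigr => c _; ring.
rewrite big_split /= -mulr_suml -mulr_sumr hq1 -LqE mxaddE; ring.
Qed.

Lemma phi_ge0 (L : 'M[R]_k) (g q : 'rV[R]_k) : simplex q -> 0 <= phi L g q.
Proof.
case=> hq _; apply: sumr_ge0 => c _; apply: mulr_ge0 => //.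
apply: mulr_ge0; last exact: sqnorm_ge0.
by rewrite invr_ge0; apply: mulr_ge0 => //; apply: ler0n.
Qed.

Lemma dphi_ge L (F : 'M[R]_k) q f : simplex q ->
  (forall y : 'I_k, ((col y L)^T <= F)%MS) ->
  (2 * k%:R)^-1 * sqnorm (f + Lq L q) <= dphi F L f q.
Proof.
move=> hq hF.
have h : inf [set phi L g q | g in inF F] <= phi L (- Lq L q) q.
  apply: ge_inf.
    by exists 0 => x [g _ <-]; apply: phi_ge0.
  exists (- Lq L q) => //; rewrite /inF -scaleN1r; apply: scalemx_sub.
  exact: Lq_in.
rewrite /dphi -(phi_diff L q f hq); lra.
Qed.

Lemma dotE (u w : 'rV[R]_k) : \sum_l u 0 l * w 0 l = (u *m w^T) 0 0.
Proof. rewrite mxE; apply: eq_bigr => l _; by rewrite [w^T _ _]mxE. Qed.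

Lemma sum_delta (u : 'rV[R]_k) (i : 'I_k) :
  \sum_l u 0 l * (delta_mx 0 i : 'rV[R]_k) 0 l = u 0 i.
Proof.
rewrite (bigD1 i) //= mxE !eqxx mulr1 big1 ?addr0 // => l /negbTE hl.
by rewrite mxE hl andbF mulr0.
Qed.

Lemma dot_delta (u : 'rV[R]_k) (i j : 'I_k) :
  \sum_l u 0 l * Delta R i j 0 l = u 0 i - u 0 j.
Proof.
transitivity (\sum_l (u 0 l * (delta_mx 0 i : 'rV[R]_k) 0 l
                      - u 0 l * (delta_mx 0 j : 'rV[R]_k) 0 l)).
  by apply: eq_bigr => l _; rewrite /Delta mxsubE mulrBr.
by rewrite sumrB !sum_delta.
Qed.

Lemma dot_proj (F : 'M[R]_k) (u w : 'rV[R]_k) : (u <= F)%MS ->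
  \sum_l u 0 l * projF F w 0 l = \sum_l u 0 l * w 0 l.
Proof.
move=> hu; rewrite !dotE /projF trmx_mul projmx_sym mulmxA projmx_fix //.
Qed.

Lemma sqnorm_Delta (i j : 'I_k) : i != j -> sqnorm (Delta R i j) = 2.
Proof.
move=> hij; rewrite /sqnorm.
transitivity (\sum_l Delta R i j 0 l * Delta R i j 0 l).
  by apply: eq_bigr => l _; rewrite expr2.
rewrite dot_delta /Delta !mxsubE !mxE !eqxx /= (negbTE hij) eq_sym (negbTE hij).
by rewrite /= subr0 sub0r opprK.
Qed.
End Proj.

Theorem theorem7 (R : realType) (k : nat) (hk : (1 < k)%N)
  (L : 'M[R]_k) (hL : forall i j, 0 <= L i j)
  (F : 'M[R]_k) (hF : forall y : 'I_k, ((col y L)^T <= F)%MS)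
  (eps : R) (heps : 0 <= eps) :
  ((eps ^+ 2)%:E * invE (2 * k%:R * maxProjDelta F) <= Hcal F L eps)%E /\
  ((eps ^+ 2 / (4 * k%:R))%:E <= (eps ^+ 2)%:E * invE (2 * k%:R * maxProjDelta F))%E.
Proof.
have k0 : (0 < k)%N by apply: ltnW.
pose i0 : 'I_k := Ordinal k0.
pose i1 : 'I_k := Ordinal hk.
have i01 : i0 != i1 by [].
have kp : 0 < k%:R :> R by rewrite ltr0n.
set M := maxProjDelta F.
have Mle : forall i j : 'I_k, i != j -> sqnorm (projF F (Delta R i j)) <= M.
  move=> i j hij; rewrite /M /maxProjDelta.
  exact: (@le_bigmax_cond _ _ _ 0 (i, j) (fun ij : 'I_k * 'I_k => ij.1 != ij.2)
            (fun ij => sqnorm (projF F (Delta R ij.1 ij.2))) hij).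
have M0 : 0 <= M by apply: le_trans (Mle _ _ i01); exact: sqnorm_ge0.
have M2 : M <= 2.
  rewrite /M /maxProjDelta; apply: bigmax_le => // -[i j] /= hij.
  by rewrite -(@sqnorm_Delta R k i j hij); exact: projF_le.
split.
  apply: le_ereal_inf_tmp => x [f [q [hf [hq [he ->]]]]].
  have hd := @dphi_ge R k L F q f hq hF.
  set u := f + Lq R k L q in hd.
  have su0 : 0 <= (2 * k%:R)^-1 * sqnorm u.
    apply: mulr_ge0; last exact: sqnorm_ge0.
    by rewrite invr_ge0; apply: mulr_ge0 => //; apply: ltW.
  case: (eqVneq eps 0) => he0.
    by rewrite he0 expr0n /= mul0e lee_fin; lra.
  have epsp : 0 < eps by rewrite lt_def he0.
  have [i [j [hi hij]]] := @dell_bound R k i0 L F q f eps he.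
  have uF : (u <= F)%MS by apply: addmx_sub => //; exact: Lq_in.
  have hdiff : eps <= u 0 i - u 0 j by rewrite !mxaddE; have := hi j; lra.
  have ij : i != j by apply/eqP => e; move: hdiff; rewrite e subrr; lra.
  have cs : eps ^+ 2 <= sqnorm u * M.
    have e1 : u 0 i - u 0 j = \sum_l u 0 l * projF F (Delta R i j) 0 l.
      by rewrite dot_proj // dot_delta.
    have c1 := @CS R k (fun l => u 0 l) (fun l => projF F (Delta R i j) 0 l).
    have c2 := ler_pM (ltW epsp) (ltW epsp) hdiff hdiff.
    have c3 : sqnorm u * sqnorm (projF F (Delta R i j)) <= sqnorm u * M.
      by apply: ler_wpM2l; [exact: sqnorm_ge0 | exact: Mle].
    move: c1 c2 c3; rewrite -e1 /sqnorm !expr2; lra.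
  have Mp : 0 < M.
    rewrite lt_def M0 andbT; apply/eqP => M00.
    move: cs; rewrite M00 mulr0 => cs.
    have : 0 < eps ^+ 2 by apply: exprn_gt0.
    lra.
  have dp : 0 < 2 * k%:R * M by apply: mulr_gt0 => //; apply: mulr_gt0.
  rewrite /invE (negbTE (lt0r_neq0 dp)) -EFinM lee_fin.
  rewrite ler_pdivrMr //.
  have e2 : (2 * k%:R)^-1 * sqnorm u * (2 * k%:R * M) = sqnorm u * M.
    by field; rewrite lt0r_neq0.
  have := ler_wpM2r (ltW dp) hd.
  lra.
rewrite /invE; case: eqP => hM.
  case: (eqVneq eps 0) => he0.
    by rewrite he0 expr0n /= mul0r mul0e.
  have epsp : 0 < eps by rewrite lt_def he0.
  by rewrite gt0_muley ?leey // lte_fin exprn_gt0.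
have Mp : 0 < M.
  rewrite lt_def M0 andbT; apply/eqP => M00; apply: hM; by rewrite M00 mulr0.
rewrite -EFinM lee_fin ler_wpM2l ?exprn_ge0 //.
rewrite lef_pV2 ?posrE.
- by have := ler_wpM2l (ltW kp) M2; nra.
- by apply: mulr_gt0.
- by apply: mulr_gt0 => //; apply: mulr_gt0.
Qed.
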